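(* Let $2\le n\le N$ and $\delta\in(0,1]$. With probability at least $1-\delta$, \[ \max_{1\le k\le n}\sigma^2_{>,k}\le \sigma^2+\frac{\sigma(b-a)(n-1)}{N-n+1}\sqrt{\frac{2\log(1/\delta)}{n-1}}. \] Similarly, if $1\le n\le N-2$, then with probability at least $1-\delta$, \[ \max_{n\le k\le N-1}\sigma^2_{<,k+1}\le \sigma^2+\frac{\sigma(b-a)(N-n-1)}{n+1}\sqrt{\frac{2\log(1/\delta)}{N-n-1}}. \]
   Context: Let $N\ge 2$ and let $\mathcal X=(x_1,\dots,x_N)$ be a finite population of real numbers (repetitions allowed). Let $(X_1,\dots,X_N)=(x_{\pi(1)},\dots,x_{\pi(N)})$, where $\pi$ is a uniformly random permutation of $\{1,\dots,N\}$. For $n\le N$, $(X_1,\dots,X_n)$ is therefore a sample of size $n$ drawn uniformly without replacement from $\mathcal X$. Let $\mu=\frac1N\sum_{i=1}^N x_i$, $\sigma^2=\frac1N\sum_{i=1}^N(x_i-\mu)^2$, $\sigma=\sqrt{\sigma^2}$, $a=\min_i x_i$ and $b=\max_i x_i$. Define the conditional variances \[ \sigma^2_{>,k}=\operatorname{Var}\big(X_k\mid X_1,\dots,X_{k-1}\big)\quad(1\le k\le N),\qquad \sigma^2_{<,j}=\operatorname{Var}\big(X_j\mid X_{j+1},\dots,X_N\big)\quad(1\le j\le N), \] with conditioning on the trivial $\sigma$-algebra when the list of conditioning variables is empty. *)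

(* Defs.v *)
From Stdlib Require Import Reals.
From mathcomp Require Import all_boot.

Open Scope R_scope.

(* Sample space: all permutations pi of {0,..,N-1}, as duplicate-free lists
   (pi = [:: pi(1); ...; pi(N)] in 0-based indices); uniform measure. *)
Definition Omega (N : nat) : seq (seq nat) := permutations (iota 0 N).

Definition sumR {A : Type} (l : seq A) (f : A -> R) : R :=
  foldr (fun a acc => f a + acc) 0 l.

(* Population x_1..x_N is given as x 0, ..., x (N-1). *)
(* k-th draw (1-based k): X_k = x_{pi(k)}. *)
Definition draw (x : nat -> R) (p : seq nat) (k : nat) : R :=
  x (seq.nth 0%N p (k - 1)).

Definition pop_mean (N : nat) (x : nat -> R) : R := sumR (iota 0 N) x / INR N.
Definition pop_var (N : nat) (x : nat -> R) : R :=
  sumR (iota 0 N) (fun i => (x i - pop_mean N x) ^ 2) / INR N.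
Definition pop_sd (N : nat) (x : nat -> R) : R := sqrt (pop_var N x).
Definition pop_min (N : nat) (x : nat -> R) : R := foldr Rmin (x 0%N) (map x (iota 0 N)).
Definition pop_max (N : nat) (x : nat -> R) : R := foldr Rmax (x 0%N) (map x (iota 0 N)).

Definition eqlR (u v : list R) : bool :=
  if List.list_eq_dec Req_EM_T u v then true else false.

(* Conditional expectation, on the uniform finite space Om, of f given the
   sigma-algebra generated by the random vector G, evaluated at outcome p. *)
Definition condE (Om : seq (seq nat)) (G : seq nat -> list R)
  (f : seq nat -> R) (p : seq nat) : R :=
  let S := filter (fun q => eqlR (G q) (G p)) Om in
  sumR S f / INR (size S).

Definition condVar (Om : seq (seq nat)) (G : seq nat -> list R)
  (f : seq nat -> R) (p : seq nat) : R :=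
  condE Om G (fun q => (f q - condE Om G f q) ^ 2) p.

Definition sigma2_gt (N : nat) (x : nat -> R) (k : nat) (p : seq nat) : R :=
  condVar (Omega N) (fun q => map (draw x q) (iota 1 (k - 1)))
          (fun q => draw x q k) p.

Definition sigma2_lt (N : nat) (x : nat -> R) (j : nat) (p : seq nat) : R :=
  condVar (Omega N) (fun q => map (draw x q) (iota j.+1 (N - j)))
          (fun q => draw x q j) p.

Definition maxR (l : seq nat) (f : nat -> R) : R :=
  foldr Rmax (f (head 0%N l)) (map f l).

Definition prob (N : nat) (E : seq nat -> bool) : R :=
  sumR (Omega N) (fun p => if E p then 1 else 0) / INR (size (Omega N)).

Definition Rleb (u v : R) : bool := if Rle_dec u v then true else false.

(* Main.v *)
Require Import Defs.
From Stdlib Require Import Reals.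
From mathcomp Require Import all_boot.
From Stdlib Require Import Lra Lia Psatz Arith Factorial.
From mathcomp Require Import zify.
Open Scope R_scope.

Section SumR.
Context {A : Type}.
Lemma sumR_nil (f : A -> R) : sumR [::] f = 0. Proof. by []. Qed.
Lemma sumR_cons a l (f : A -> R) : sumR (a :: l) f = f a + sumR l f. Proof. by []. Qed.
Lemma sumR_cat l1 l2 (f : A -> R) : sumR (l1 ++ l2) f = sumR l1 f + sumR l2 f.
Proof. elim: l1 => [|a l IH] /=; [lra| rewrite IH; lra]. Qed.
Lemma sumR_map {B : Type} (g : B -> A) l (f : A -> R) :
  sumR (map g l) f = sumR l (fun b => f (g b)).
Proof. elim: l => [|a l IH] //=; by rewrite IH. Qed.
Lemma sumR_plus l (f g : A -> R) : sumR l (fun a => f a + g a) = sumR l f + sumR l g.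
Proof. elim: l => [|a l IH] /=; [lra| rewrite IH; lra]. Qed.
Lemma sumR_scale l c (f : A -> R) : sumR l (fun a => c * f a) = c * sumR l f.
Proof. elim: l => [|a l IH] /=; [lra| rewrite IH; lra]. Qed.
Lemma sumR_const l c : sumR l (fun _ : A => c) = INR (size l) * c.
Proof. elim: l => [|a l IH]; first by rewrite /=; lra.
rewrite sumR_cons IH; change (size (a::l)) with (S (size l)); rewrite S_INR; lra. Qed.
Lemma sumR_flatten (ls : seq (seq A)) (f : A -> R) :
  sumR (flatten ls) f = sumR ls (fun l => sumR l f).
Proof. elim: ls => [|l ls IH] //=; by rewrite sumR_cat IH. Qed.
End SumR.
Lemma sumR_swap {A B : Type} (l1 : seq A) (l2 : seq B) (f : A -> B -> R) :
  sumR l1 (fun a => sumR l2 (fun b => f a b)) = sumR l2 (fun b => sumR l1 (fun a => f a b)).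
Proof.
elim: l1 => [|a l IH].
  elim: l2 => [|b l2 IH2] //=; rewrite -IH2 /=; lra.
by rewrite sumR_cons IH -(sumR_plus l2 (f a)). Qed.

Section SumREq.
Context {A : eqType}.
Lemma sumR_ext_in (l : seq A) (f g : A -> R) :
  (forall a, a \in l -> f a = g a) -> sumR l f = sumR l g.
Proof.
elim: l => [|a l IH] //= H; rewrite H ?mem_head // IH // => b Hb.
by apply: H; rewrite in_cons Hb orbT.
Qed.
Lemma sumR_le_in (l : seq A) (f g : A -> R) :
  (forall a, a \in l -> f a <= g a) -> sumR l f <= sumR l g.
Proof.
elim: l => [|a l IH] /= H; first lra.
have := H a (mem_head _ _).
have : sumR l f <= sumR l g by apply: IH => b Hb; apply: H; rewrite in_cons Hb orbT.
lra.
Qed.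
Lemma sumR_rem (l : seq A) a (f : A -> R) : a \in l -> sumR l f = f a + sumR (rem a l) f.
Proof.
elim: l => [|b l IH] // H.
case: (eqVneq b a) => [E|ne]; first by rewrite /= E eqxx.
have H' : a \in l.
  by move: H; rewrite in_cons => /orP [/eqP E|//]; rewrite E eqxx in ne.
rewrite /= (negbTE ne) sumR_cons (IH H') /=; lra.
Qed.
Lemma sumR_perm (l1 l2 : seq A) (f : A -> R) : perm_eq l1 l2 -> sumR l1 f = sumR l2 f.
Proof.
elim: l1 l2 => [|a l IH] l2 P.
  by move: (perm_size P) => /= /esym /size0nil ->.
have al2 : a \in l2 by rewrite -(perm_mem P) mem_head.
rewrite (sumR_rem _ _ f al2) sumR_cons (IH (rem a l2)) //.
by rewrite -(perm_cons a) -(permPr (perm_to_rem al2)).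
Qed.
End SumREq.

Definition avg {A : Type} (l : seq A) (f : A -> R) := sumR l f / INR (size l).

Lemma INR_posn {n} : (0 < n)%N -> 0 < INR n.
Proof. move=> H; apply: lt_0_INR; apply/ltP. exact H. Qed.

Section Avg.
Context {A : eqType}.
Lemma avg_le (l : seq A) f g : (forall a, a \in l -> f a <= g a) -> (0 < size l)%N ->
  avg l f <= avg l g.
Proof.
move=> H Hs; rewrite /avg; apply: Rmult_le_compat_r.
  by apply: Rlt_le; apply: Rinv_0_lt_compat; apply: INR_posn.
exact: sumR_le_in.
Qed.
Lemma avg_const (l : seq A) c : (0 < size l)%N -> avg l (fun _ => c) = c.
Proof.
move=> Hs; rewrite /avg sumR_const; have := INR_posn Hs; move=> H; field; lra.
Qed.
Lemma avg_ext_in (l : seq A) f g : (forall a, a \in l -> f a = g a) -> avg l f = avg l g.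
Proof. by move=> H; rewrite /avg (sumR_ext_in _ _ _ H). Qed.
Lemma avg_perm (l1 l2 : seq A) f : perm_eq l1 l2 -> avg l1 f = avg l2 f.
Proof. by move=> P; rewrite /avg (sumR_perm _ _ f P) (perm_size P). Qed.
Lemma avg_plus (l : seq A) f g : avg l (fun a => f a + g a) = avg l f + avg l g.
Proof. rewrite /avg sumR_plus /Rdiv; lra. Qed.
Lemma avg_scale (l : seq A) c f : avg l (fun a => c * f a) = c * avg l f.
Proof. rewrite /avg sumR_scale /Rdiv; lra. Qed.
Lemma avg_jensen (l : seq A) f : (0 < size l)%N -> exp (avg l f) <= avg l (fun a => exp (f a)).
Proof.
move=> Hs; set m := avg l f.
have H : forall a, a \in l -> (exp m + exp m * f a) + (- (exp m * m)) <= exp (f a).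
  move=> a _; have := exp_ineq1_le (f a - m).
  have E : exp (f a) = exp m * exp (f a - m) by rewrite -exp_plus; f_equal; lra.
  rewrite E => H1.
  have : exp m * (1 + (f a - m)) <= exp m * exp (f a - m).
    apply: Rmult_le_compat_l; [apply: Rlt_le; apply: exp_pos| lra].
  lra.
have := sumR_le_in _ _ _ H.
rewrite !sumR_plus !sumR_const sumR_scale.
have Hn := INR_posn Hs.
have Hm : sumR l f = INR (size l) * m by rewrite /m /avg; field; lra.
rewrite Hm /avg => H2.
apply: (Rmult_le_reg_l (INR (size l))) => //.
have -> : INR (size l) * (sumR l (fun a : A => exp (f a)) / INR (size l)) = sumR l (fun a : A => exp (f a)) by field; lra.
nra.
Qed.
End Avg.

Lemma mul_div_cancel x k : 0 < k -> x = k * (x / k).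
Proof. move=> H; field; lra. Qed.

Definition Ep (s : seq nat) (f : seq nat -> R) := avg (permutations s) f.

Lemma sumR_perms (s : seq nat) (f : seq nat -> R) : uniq s -> (0 < size s)%N ->
  sumR (permutations s) f = sumR s (fun a => sumR (permutations (rem a s)) (fun t => f (a :: t))).
Proof.
move=> Us Hs; rewrite (sumR_perm _ _ f (permutationsE Hs)) undup_id //.
rewrite sumR_flatten sumR_map; apply: sumR_ext_in => a _.
by rewrite sumR_map.
Qed.

Lemma size_perms_pos (s : seq nat) : uniq s -> (0 < size (permutations s))%N.
Proof. by move=> Us; rewrite size_permutations // fact_gt0. Qed.

Lemma Ep_cons (s : seq nat) f : uniq s -> (0 < size s)%N ->
  Ep s f = avg s (fun a => Ep (rem a s) (fun t => f (a :: t))).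
Proof.
move=> Us Hs.
have Hr : forall a, a \in s -> size (permutations (rem a s)) = (size s).-1`!.
  by move=> a Ha; rewrite size_permutations ?rem_uniq // (size_rem Ha).
have E1 : forall a, a \in s -> sumR (permutations (rem a s)) (fun t => f (a::t)) =
   INR (size s).-1`! * Ep (rem a s) (fun t => f (a::t)).
  move=> a Ha; rewrite /Ep /avg Hr //.
  apply: mul_div_cancel; exact: INR_posn (fact_gt0 _).
rewrite {1}/Ep {1}/avg sumR_perms // (sumR_ext_in _ _ _ E1) sumR_scale size_permutations // /avg.
case: (size s) Hs => // r _.
move: (sumR s _) => X.
rewrite factS mult_INR.
have := INR_posn (fact_gt0 r); have := INR_posn (ltn0Sn r); move=> H1 H2.
change (r.+1.-1) with r; field; lra.
Qed.

Lemma Ep_le s f g : uniq s -> (forall t, perm_eq t s -> f t <= g t) -> Ep s f <= Ep s g.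
Proof.
move=> Us H; apply: avg_le; last exact: size_perms_pos.
by move=> t; rewrite mem_permutations; apply: H.
Qed.

Lemma Ep_const s c : uniq s -> Ep s (fun _ => c) = c.
Proof. by move=> Us; apply: avg_const; apply: size_perms_pos. Qed.

Lemma Ep_ext s f g : (forall t, perm_eq t s -> f t = g t) -> Ep s f = Ep s g.
Proof. by move=> H; apply: avg_ext_in => t; rewrite mem_permutations; apply: H. Qed.

Definition mZ (Z : nat -> R) (l : seq nat) := sumR l Z / INR (size l).

Lemma mZ_perm Z t s : perm_eq t s -> mZ Z t = mZ Z s.
Proof. by move=> P; rewrite /mZ (sumR_perm _ _ Z P) (perm_size P). Qed.

Lemma perm_cons_rem (a : nat) t s : a \in s -> perm_eq t (rem a s) -> perm_eq (a :: t) s.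
Proof.
move=> Ha P; rewrite perm_sym (permPl (perm_to_rem Ha)) perm_cons perm_sym //.
Qed.

Lemma Ep_jensen s f : uniq s -> exp (Ep s f) <= Ep s (fun t => exp (f t)).
Proof. by move=> Us; apply: avg_jensen; apply: size_perms_pos. Qed.

Lemma Ep_scale s c f : Ep s (fun t => c * f t) = c * Ep s f.
Proof. exact: avg_scale. Qed.

Lemma mZ_rem Z (s : seq nat) a : a \in s -> (1 < size s)%N ->
  mZ Z (rem a s) = (sumR s Z - Z a) / (INR (size s) - 1).
Proof.
move=> Ha H; rewrite /mZ (size_rem Ha) (sumR_rem _ _ Z Ha).
case: (size s) H => // r _; rewrite S_INR /=.
have -> : sumR (rem a s) Z = Z a + sumR (rem a s) Z - Z a by ring.
f_equal; lra.
Qed.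

Lemma avg_mZ_rem Z (s : seq nat) : uniq s -> (1 < size s)%N ->
  avg s (fun a => mZ Z (rem a s)) = mZ Z s.
Proof.
move=> Us H.
rewrite (avg_ext_in _ (fun a => mZ Z (rem a s)) (fun a => / (INR (size s) - 1) * (sumR s Z + (- 1) * Z a))); last first.
  by move=> a Ha; rewrite mZ_rem // /Rdiv Rmult_comm; f_equal; ring.
rewrite avg_scale avg_plus avg_scale avg_const; last exact: ltnW.
rewrite /avg /mZ.
have H1 : 1 < INR (size s) by apply: lt_1_INR; apply/ltP.
have E : forall X n, 1 < n -> / (n - 1) * (X + -1 * (X / n)) = X / n by move=> X n Hn; field; lra.
exact: E.
Qed.

Lemma Ep_mean_drop Z k (s : seq nat) : uniq s -> (k < size s)%N ->
  Ep s (fun t => mZ Z (drop k t)) = mZ Z s.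
Proof.
elim: k s => [|k IH] s Us Hk.
  rewrite (Ep_ext _ _ (fun _ => mZ Z s)) ?Ep_const // => t P.
  by rewrite drop0 (mZ_perm Z _ _ P).
rewrite Ep_cons //; last exact: (ltn_trans (ltn0Sn k) Hk).
rewrite (avg_ext_in _ _ (fun a => mZ Z (rem a s))); first by apply: avg_mZ_rem => //; exact: (leq_ltn_trans (ltn0Sn k) Hk).
move=> a Ha /=; apply: IH; first exact: rem_uniq.
by rewrite (size_rem Ha); case: (size s) Hk.
Qed.

Definition Rltb (u v : R) : bool := if Rlt_dec u v then true else false.
Definition indR (b : bool) : R := if b then 1 else 0.
Definition ev Z th k (t : seq nat) := has (fun j => Rltb th (mZ Z (drop j t))) (iota 0 k.+1).

Lemma ev_cons Z th k a t :
  ev Z th k.+1 (a :: t) = Rltb th (mZ Z (a :: t)) || ev Z th k t.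
Proof.
rewrite /ev.
have -> : iota 0 k.+2 = 0%N :: map (addn 1) (iota 0 k.+1) by rewrite -(iotaDl 1 0).
rewrite /= has_map drop0; congr orb.
Qed.

Lemma doob Z th lam k (s : seq nat) : uniq s -> (k < size s)%N -> 0 <= lam ->
  Ep s (fun t => indR (ev Z th k t)) <= exp (- lam * th) * Ep s (fun t => exp (lam * mZ Z (drop k t))).
Proof.
move=> + + Hl; elim: k s => [|k IH] s Us Hk.
  rewrite (Ep_ext _ _ (fun _ => indR (Rltb th (mZ Z s)))); last first.
    by move=> t P; rewrite /ev /= drop0 (mZ_perm Z _ _ P) orbF.
  rewrite (Ep_ext _ (fun t => exp (lam * mZ Z (drop 0 t))) (fun _ => exp (lam * mZ Z s))); last first.
    by move=> t P; rewrite drop0 (mZ_perm Z _ _ P).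
  rewrite !Ep_const // -exp_plus /indR /Rltb.
  case: Rlt_dec => H /=.
    have H1 := exp_ineq1_le (- lam * th + lam * mZ Z s).
    have H2 : 0 <= - lam * th + lam * mZ Z s by nra.
    lra.
  apply: Rlt_le; exact: exp_pos.
have Hs0 : (0 < size s)%N by exact: (ltn_trans (ltn0Sn k) Hk).
case: (Rlt_dec th (mZ Z s)) => Hth.
  apply: (Rle_trans _ 1).
    rewrite -(Ep_const s 1 Us) ; apply: Ep_le => // t _; rewrite /indR; case: ev; lra.
  have J := Ep_jensen s (fun t => lam * mZ Z (drop k.+1 t)) Us.
  rewrite Ep_scale Ep_mean_drop // in J.
  have E1 : 1 <= exp (- lam * th) * exp (lam * mZ Z s).
    rewrite -exp_plus; have H1 := exp_ineq1_le (- lam * th + lam * mZ Z s).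
    have H2 : 0 <= - lam * th + lam * mZ Z s by nra.
    lra.
  apply: (Rle_trans _ _ _ E1); apply: Rmult_le_compat_l; [apply: Rlt_le; exact: exp_pos| exact: J].
rewrite Ep_cons // (Ep_cons s (fun t => exp (lam * mZ Z (drop k.+1 t)))) //.
rewrite -avg_scale; apply: avg_le => // a Ha.
have Ur : uniq (rem a s) by exact: rem_uniq.
have Hkr : (k < size (rem a s))%N by rewrite (size_rem Ha); case: (size s) Hk.
rewrite (Ep_ext _ _ (fun t => indR (ev Z th k t))); first exact: IH.
move=> t P; rewrite ev_cons.
have -> : mZ Z (a :: t) = mZ Z s by apply: mZ_perm; exact: perm_cons_rem.
by rewrite /Rltb; case: Rlt_dec.
Qed.

Lemma exp_cubic x : 0 <= x -> 1 + x + x^2/2 + x^3/6 <= exp x.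
Proof.
  intros Hx; set (An := fun N:nat => / INR (fact N) * x ^ N).
  assert (H : Un_cv (fun n:nat => sum_f_R0 An n) (exp x)).
  { unfold exp; unfold projT1; case (exist_exp x); intro.
    unfold exp_in; unfold infinite_sum, Un_cv; trivial. }
  assert (H2 := sum_incr An 3 (exp x) H).
  assert (E : sum_f_R0 An 3 = 1 + x + x^2/2 + x^3/6).
  { unfold An; simpl; field. }
  rewrite -E; apply H2.
  intro n; unfold An; apply Rmult_le_pos.
  - left; apply Rinv_0_lt_compat; apply INR_fact_lt_0.
  - apply pow_le; exact Hx.
Qed.
Lemma exp_neg_quad u : 0 <= u -> exp (- u) <= 1 - u + u^2/2.
Proof.
  intros Hu.
  assert (H := exp_cubic u Hu).
  assert (Hp : 0 < exp u) by apply exp_pos.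
  assert (E : exp (- u) = / exp u) by (rewrite exp_Ropp; reflexivity).
  rewrite E.
  assert (Hq : 0 < 1 - u + u^2/2) by nra.
  apply (Rmult_le_reg_l (exp u)); [exact Hp|].
  rewrite Rinv_r; last lra.
  assert (1 <= (1 + u + u^2/2 + u^3/6) * (1 - u + u^2/2)).
  { assert (0 <= u^3) by (apply pow_le; lra). assert (0 <= u^4) by (apply pow_le; lra).
    assert (0 <= u^5) by (apply pow_le; lra). nra. }
  nra.
Qed.

Lemma avg_exp_step Z B a0 (s : seq nat) beta :
  (forall a, a \in s -> 0 <= Z a /\ Z a * Z a <= B * Z a) ->
  0 <= beta <= a0 -> (0 < size s)%N ->
  avg s (fun a => exp (- (beta * Z a))) <= exp (- (beta * (1 - a0 * B / 2)) * (sumR s Z / INR (size s))).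
Proof.
move=> HZ Hb Hs.
set c := 1 - a0 * B / 2.
have P : forall a, a \in s -> exp (- (beta * Z a)) <= 1 + (- (beta * c)) * Z a.
  move=> a Ha; have [Z0 Z2] := HZ a Ha.
  have H1 := exp_neg_quad (beta * Z a) (Rmult_le_pos _ _ (proj1 Hb) Z0).
  have H2 : (beta * Z a) ^ 2 <= beta * a0 * B * Z a.
    have -> : (beta * Z a) ^ 2 = beta * beta * (Z a * Z a) by ring.
    have H3 : beta * beta * (Z a * Z a) <= beta * beta * (B * Z a).
      by apply: Rmult_le_compat_l; nra.
    have H4 : 0 <= B * Z a by nra.
    have H5 : beta * beta * (B * Z a) <= beta * a0 * (B * Z a).
      apply: Rmult_le_compat_r => //; nra.
    nra.
  rewrite /c; nra.
have := avg_le _ _ _ P Hs.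
rewrite avg_plus avg_const // avg_scale => H.
apply: (Rle_trans _ _ _ H).
have := exp_ineq1_le (- (beta * c) * (sumR s Z / INR (size s))).
by rewrite /avg.
Qed.

Fixpoint Pp (c : R) (k r : nat) : R :=
  match k with 0%N => 1 | k'.+1 => (1 - c / INR r) * Pp c k' r.-1 end.

Lemma Pp_range c k r : 0 <= c <= 1 -> (k <= r)%N -> 0 <= Pp c k r <= 1.
Proof.
move=> Hc; elim: k r => [|k IH] r Hk /=; first lra.
have Hr : 1 <= INR r by apply: (le_INR 1); apply/leP; exact: (leq_ltn_trans (leq0n k) Hk).
have [H1 H2] : 0 <= Pp c k r.-1 <= 1 by apply: IH; case: r Hk Hr.
have H3 : 0 <= c / INR r <= 1.
  split; first by apply: Rmult_le_pos; [lra| apply: Rlt_le; apply: Rinv_0_lt_compat; lra].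
  apply: (Rmult_le_reg_r (INR r)); first lra.
  rewrite /Rdiv Rmult_assoc Rinv_l; lra.
split; nra.
Qed.

Lemma mgf Z B a0 k (s : seq nat) alpha :
  uniq s -> (k <= size s)%N ->
  (forall a, a \in s -> 0 <= Z a /\ Z a * Z a <= B * Z a) ->
  0 <= B -> 0 <= 1 - a0 * B / 2 ->
  0 <= alpha <= a0 ->
  Ep s (fun t => exp (- alpha * sumR (take k t) Z)) <=
  exp (- alpha * sumR s Z * (1 - Pp (1 - a0 * B / 2) k (size s))).
Proof.
move=> Us Hk HZ HB Hc Ha; set c := 1 - a0 * B / 2.
have Hc1 : 0 <= c <= 1.
  have : 0 <= a0 * B by apply: Rmult_le_pos; lra.
  rewrite /c; lra.
elim: k s alpha Us Hk HZ Ha => [|k IH] s alpha Us Hk HZ Ha.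
  rewrite (Ep_ext _ _ (fun _ => 1)) ?Ep_const //; last first.
    by move=> t _; rewrite take0 /= Rmult_0_r exp_0.
  rewrite /= Rminus_diag Rmult_0_r exp_0; lra.
have Hs : (0 < size s)%N by exact: (leq_ltn_trans (leq0n k) Hk).
rewrite Ep_cons //.
set r := size s.
set P' := Pp c k r.-1.
have HP' : 0 <= P' <= 1 by apply: Pp_range => //; rewrite /r; case: (size s) Hk.
have E1 : forall a, a \in s ->
   Ep (rem a s) (fun t => exp (- alpha * sumR (take k.+1 (a :: t)) Z)) <=
   exp (- alpha * sumR s Z * (1 - P')) * exp (- ((alpha * P') * Z a)).
  move=> a Ha'.
  rewrite (Ep_ext _ _ (fun t => exp (- alpha * Z a) * exp (- alpha * sumR (take k t) Z))); last first.
    by move=> t _; rewrite /= -exp_plus; f_equal; ring.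
  rewrite Ep_scale.
  have Hr : size (rem a s) = r.-1 by rewrite (size_rem Ha').
  have Hk' : (k <= size (rem a s))%N by rewrite Hr /r; case: (size s) Hk.
  have := IH (rem a s) alpha (rem_uniq _ Us) Hk' (fun b Hb => HZ b (mem_rem Hb)) Ha.
  rewrite Hr -/P' (sumR_rem _ _ Z Ha') => H.
  apply: (Rle_trans _ (exp (- alpha * Z a) * exp (- alpha * sumR (rem a s) Z * (1 - P')))).
    apply: Rmult_le_compat_l => //; apply: Rlt_le; exact: exp_pos.
  rewrite -!exp_plus; apply: Req_le; f_equal; ring.
apply: (Rle_trans _ _ _ (avg_le _ _ _ E1 Hs)).
rewrite avg_scale.
have Hb : 0 <= alpha * P' <= a0 by split; nra.
have := avg_exp_step Z B a0 s (alpha * P') HZ Hb Hs.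
rewrite -/c -/r => H.
apply: (Rle_trans _ (exp (- alpha * sumR s Z * (1 - P')) * exp (- (alpha * P' * c) * (sumR s Z / INR r)))).
  apply: Rmult_le_compat_l => //; apply: Rlt_le; exact: exp_pos.
rewrite -exp_plus /= -/P'; apply: Req_le; f_equal.
have Hr0 : 0 < INR r by apply: INR_posn.
field; lra.
Qed.

Lemma Pp1_val k r : (k <= r)%N -> Pp 1 k r * INR r = INR (r - k).
Proof.
elim: k r => [|k IH] r Hk; first by rewrite /= subn0; ring.
case: r Hk => // r Hk.
change (Pp 1 k.+1 r.+1) with ((1 - 1 / INR r.+1) * Pp 1 k r).
rewrite subSS -(IH r Hk).
have H : 0 < INR r.+1 by apply: INR_posn.
rewrite S_INR in H *.
field; lra.
Qed.

Lemma Pp_conv c k r : 0 <= c <= 1 -> (k <= r)%N -> Pp c k r <= 1 - c + c * Pp 1 k r.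
Proof.
move=> Hc; elim: k r => [|k IH] r Hk; first by rewrite /=; lra.
case: r Hk => // r Hk.
have HQ := IH r Hk.
have [Q0 Q1] := Pp_range c k r Hc Hk.
have [R0 R1] : 0 <= Pp 1 k r <= 1 by apply: Pp_range => //; lra.
change (Pp c k.+1 r.+1) with ((1 - c / INR r.+1) * Pp c k r).
change (Pp 1 k.+1 r.+1) with ((1 - 1 / INR r.+1) * Pp 1 k r).
have H : 1 <= INR r.+1 by apply: (le_INR 1); apply/leP.
set x := / INR r.+1.
have Hx : 0 < x <= 1.
  split; first by apply: Rinv_0_lt_compat; lra.
  rewrite /x -Rinv_1; apply: Rinv_le_contravar; lra.
have -> : c / INR r.+1 = c * x by [].
have -> : 1 / INR r.+1 = x by rewrite /x /Rdiv Rmult_1_l.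
have H1 : (1 - c * x) * Pp c k r <= (1 - c * x) * (1 - c + c * Pp 1 k r).
  apply: Rmult_le_compat_l => //; nra.
have E : (1 - c * x) * (1 - c + c * Pp 1 k r) = 1 - c + c * ((1 - x) * Pp 1 k r) - c * x * ((1 - c) * (1 - Pp 1 k r)) by ring.
have : 0 <= c * x * ((1 - c) * (1 - Pp 1 k r)) by apply: Rmult_le_pos; apply: Rmult_le_pos; lra.
lra.
Qed.

Lemma Pp_lower c k r : 0 <= c <= 1 -> (k <= r)%N -> (0 < r)%N ->
  c * INR k / INR r <= 1 - Pp c k r.
Proof.
move=> Hc Hk Hr.
have H1 := Pp_conv c k r Hc Hk.
have H2 := Pp1_val k r Hk.
have Hr' := INR_posn Hr.
rewrite minus_INR in H2; last by apply/leP.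
have E : Pp 1 k r = (INR r - INR k) / INR r by rewrite -H2; field; lra.
rewrite E in H1.
have -> : c * INR k / INR r = c - c * ((INR r - INR k) / INR r) by field; lra.
lra.
Qed.

Lemma sumR_nonneg_in (l : seq nat) Z : (forall a, a \in l -> 0 <= Z a) -> 0 <= sumR l Z.
Proof.
move=> H; have := sumR_le_in l (fun _ => 0) Z H.
by rewrite sumR_const Rmult_0_r.
Qed.

Lemma exp_mono x y : x <= y -> exp x <= exp y.
Proof.
move=> H; case: (Rle_lt_or_eq_dec _ _ H) => [Hl|->]; last lra.
by apply: Rlt_le; apply: exp_increasing.
Qed.

Lemma conc Z B (s : seq nat) K alpha t :
  uniq s -> (0 < K)%N -> (K < size s)%N ->
  (forall a, a \in s -> 0 <= Z a /\ Z a * Z a <= B * Z a) -> 0 <= B -> 0 <= alpha ->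
  Ep s (fun p => indR (ev Z (mZ Z s + t) K p)) <=
  exp (alpha ^ 2 * INR K * mZ Z s * B / 2 - alpha * (INR (size s) - INR K) * t).
Proof.
move=> Us HK0 HK HZ HB Ha.
set N := size s; set S := sumR s Z; set s2 := mZ Z s.
have HN : 0 < INR N by apply: INR_posn; exact: (ltn_trans HK0 HK).
have HKr : 0 < INR K by apply: INR_posn.
have HNK : INR K < INR N by apply: lt_INR; apply/ltP.
have HS : 0 <= S by apply: sumR_nonneg_in => a Ha'; case: (HZ a Ha').
have Es2 : S = INR N * s2 by rewrite /s2 /mZ -/S -/N; field; lra.
have Hs2 : 0 <= s2 by nra.
set lam := alpha * (INR N - INR K).
have Hlam : 0 <= lam by rewrite /lam; nra.
have D := doob Z (s2 + t) lam K s Us HK Hlam.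
apply: (Rle_trans _ _ _ D).
rewrite (Ep_ext _ _ (fun p => exp (alpha * S) * exp (- alpha * sumR (take K p) Z))); last first.
  move=> p P; rewrite -exp_plus; f_equal.
  have Hsz : size (drop K p) = (N - K)%N by rewrite size_drop (perm_size P).
  have Hsum : sumR p Z = S by rewrite (sumR_perm _ _ Z P).
  rewrite -(cat_take_drop K p) sumR_cat in Hsum.
  rewrite /mZ Hsz minus_INR; last by apply/leP; exact: ltnW.
  rewrite /lam; field_simplify; [|lra].
  have -> : sumR (drop K p) Z = S - sumR (take K p) Z by lra.
  field; lra.
rewrite Ep_scale.
set E := Ep s _.
have Hexp : forall a b Y, E <= exp Y -> a + b + Y <= alpha ^ 2 * INR K * s2 * B / 2 - alpha * (INR N - INR K) * t ->
   exp a * (exp b * E) <= exp (alpha ^ 2 * INR K * s2 * B / 2 - alpha * (INR N - INR K) * t).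
  move=> a b Y HE HY.
  apply: (Rle_trans _ (exp a * (exp b * exp Y))).
    apply: Rmult_le_compat_l; first by apply: Rlt_le; apply: exp_pos.
    apply: Rmult_le_compat_l; first by apply: Rlt_le; apply: exp_pos.
    exact: HE.
  rewrite -!exp_plus; apply: exp_mono; lra.
case: (Rle_dec (alpha * B) 2) => Hab.
  set c := 1 - alpha * B / 2.
  have Hc : 0 <= c <= 1 by rewrite /c; split; nra.
  have M := mgf Z B alpha K s alpha Us (ltnW HK) HZ HB (ltac:(rewrite -/c; lra)) (ltac:(lra)).
  rewrite -/c -/N -/S in M.
  apply: (Hexp _ _ _ M).
  have PL := Pp_lower c K N Hc (ltnW HK) (ltn_trans HK0 HK).
  have H1 : alpha * S * (c * INR K / INR N) <= alpha * S * (1 - Pp c K N).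
    apply: Rmult_le_compat_l => //; nra.
  have E2 : alpha * S * (c * INR K / INR N) = alpha * s2 * c * INR K by rewrite Es2; field; lra.
  have E3 : - lam * (s2 + t) + alpha * S + - (alpha * s2 * c * INR K) = alpha ^ 2 * INR K * s2 * B / 2 - alpha * (INR N - INR K) * t.
    rewrite /lam Es2 /c. field.
  lra.
have HE1 : E <= exp 0.
  rewrite exp_0 -(Ep_const s 1 Us); apply: Ep_le => // p P.
  rewrite -exp_0; apply: exp_mono.
  have : 0 <= sumR (take K p) Z.
    apply: sumR_nonneg_in => a Ha'; apply: (proj1 (HZ a _)).
    by rewrite -(perm_mem P); exact: mem_take Ha'.
  nra.
apply: (Hexp _ _ _ HE1).
have E3 : - lam * (s2 + t) + alpha * S + 0 = alpha * INR K * s2 - alpha * (INR N - INR K) * t.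
  by rewrite /lam Es2; ring.
rewrite E3.
have : 0 <= alpha * INR K * s2 * (alpha * B / 2 - 1).
  apply: Rmult_le_pos; [apply: Rmult_le_pos; [nra|lra]|lra].
nra.
Qed.

Definition tr (i j l : nat) : nat := if l == i then j else if l == j then i else l.
Definition swp (i j : nat) (q : seq nat) : seq nat :=
  map (fun l => nth 0%N q (tr i j l)) (iota 0 (size q)).

Lemma trK i j l : tr i j (tr i j l) = l.
Proof.
rewrite /tr; case: (eqVneq l i) => [->|Hi].
  by case: (eqVneq j i) => [->|Hj]; rewrite ?eqxx // eqxx.
case: (eqVneq l j) => [->|Hj]; first by rewrite eqxx.
by rewrite (negbTE Hi) (negbTE Hj).
Qed.

Lemma tr_lt i j l n : (i < n)%N -> (j < n)%N -> (tr i j l < n)%N = (l < n)%N.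
Proof.
rewrite /tr => Hi Hj; case: (eqVneq l i) => [->|_]; first by rewrite Hi Hj.
by case: (eqVneq l j) => [->|_]; rewrite ?Hi ?Hj.
Qed.

Lemma size_swp i j q : size (swp i j q) = size q.
Proof. by rewrite /swp size_map size_iota. Qed.

Lemma nth_swp i j q l : (i < size q)%N -> (j < size q)%N ->
  nth 0%N (swp i j q) l = nth 0%N q (tr i j l).
Proof.
move=> Hi Hj; case: (ltnP l (size q)) => Hl.
  by rewrite /swp (nth_map 0%N) ?size_iota // nth_iota.
rewrite !nth_default ?size_swp //.
by rewrite leqNgt tr_lt // -leqNgt.
Qed.

Lemma swpK i j q : (i < size q)%N -> (j < size q)%N -> swp i j (swp i j q) = q.
Proof.
move=> Hi Hj; apply: (@eq_from_nth _ 0%N); first by rewrite !size_swp.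
move=> l _; rewrite nth_swp ?size_swp // nth_swp //.
by rewrite trK.
Qed.

Lemma perm_swp i j q : (i < size q)%N -> (j < size q)%N -> perm_eq (swp i j q) q.
Proof.
move=> Hi Hj.
have E : swp i j q = map (nth 0%N q) (map (tr i j) (iota 0 (size q))) by rewrite -map_comp.
rewrite E; apply: (@perm_trans _ (map (nth 0%N q) (iota 0 (size q)))); last first.
  by rewrite (map_nth_iota0 0%N) // take_size.
apply: perm_map; apply: uniq_perm.
- rewrite map_inj_uniq ?iota_uniq //; exact: (can_inj (trK i j)).
- exact: iota_uniq.
move=> l; rewrite mem_iota add0n leq0n /=.
apply/mapP/idP => [[l' Hl' ->]|Hl].
  by rewrite tr_lt //; move: Hl'; rewrite mem_iota.
exists (tr i j l); last by rewrite trK.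
by rewrite mem_iota tr_lt.
Qed.

Lemma eqlR_eq u v : eqlR u v = true <-> u = v.
Proof. by rewrite /eqlR; case: List.list_eq_dec. Qed.

Definition cls (Om : seq (seq nat)) (G : seq nat -> list R) p :=
  filter (fun q => eqlR (G q) (G p)) Om.

Lemma mem_cls Om G p q : q \in cls Om G p = (q \in Om) && (eqlR (G q) (G p)).
Proof. by rewrite /cls mem_filter andbC. Qed.

Lemma cls_same Om G p q : q \in cls Om G p -> cls Om G q = cls Om G p.
Proof.
rewrite mem_cls => /andP [_ /eqlR_eq E].
by apply: eq_filter => r; rewrite E.
Qed.

Lemma condE_avg Om G f p : condE Om G f p = avg (cls Om G p) f.
Proof. by []. Qed.

Lemma condE_same Om G f p q : q \in cls Om G p -> condE Om G f q = condE Om G f p.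
Proof. by move=> H; rewrite !condE_avg (cls_same _ _ _ _ H). Qed.

Lemma p_in_cls Om G p : p \in Om -> p \in cls Om G p.
Proof. by move=> H; rewrite mem_cls H /=; apply/eqlR_eq. Qed.

Lemma condVar_le Om G f p c : p \in Om ->
  condVar Om G f p <= condE Om G (fun q => (f q - c) ^ 2) p.
Proof.
move=> Hp; rewrite /condVar !condE_avg.
set S := cls Om G p; set m := avg S f.
have HS : (0 < size S)%N.
  have := p_in_cls _ G _ Hp; rewrite -/S.
  by case: (S).
rewrite (avg_ext_in _ _ (fun q => (f q - m) ^ 2)); last first.
  by move=> q Hq; rewrite (condE_same _ _ f _ _ Hq) condE_avg.
rewrite (avg_ext_in _ (fun q => (f q - c) ^ 2) (fun q => (f q - m) ^ 2 + ((2 * (m - c)) * f q + (- (2 * (m - c) * m) + (m - c) ^ 2)))); last first.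
  by move=> q _; ring.
rewrite avg_plus avg_plus avg_scale avg_const // -/m.
have : 0 = - (2 * (m - c) * m) + 2 * (m - c) * m by ring.
have : 0 <= (m - c) ^ 2 by apply: pow2_ge_0.
lra.
Qed.

Lemma sumR_inv_map (S : seq (seq nat)) (phi : seq nat -> seq nat) (h : seq nat -> R) :
  uniq S -> (forall q, q \in S -> phi q \in S) -> (forall q, q \in S -> phi (phi q) = q) ->
  sumR S (fun q => h (phi q)) = sumR S h.
Proof.
move=> US Hin Hinv.
rewrite -sumR_map; apply: sumR_perm; apply: uniq_perm => //.
- rewrite map_inj_in_uniq // => q1 q2 H1 H2 E.
  by rewrite -(Hinv q1 H1) E Hinv.
move=> q; apply/mapP/idP => [[q' Hq' ->]|Hq]; first exact: Hin.
by exists (phi q); [exact: Hin | rewrite Hinv].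
Qed.

Lemma size_Omega N q : q \in Omega N -> size q = N.
Proof. by rewrite /Omega mem_permutations => /perm_size ->; rewrite size_iota. Qed.

Lemma bridge N x (I F : seq nat) k p (Zf : R -> R) :
  p \in Omega N -> k \in F -> (forall j, j \in F -> (1 <= j <= N)%N) ->
  (forall i, i \in I -> (1 <= i)%N) ->
  (forall i j, i \in I -> j \in F -> i <> j) ->
  (forall q, q \in cls (Omega N) (fun q => map (draw x q) I) p ->
     sumR F (fun j => Zf (draw x q j)) = sumR F (fun j => Zf (draw x p j))) ->
  condE (Omega N) (fun q => map (draw x q) I) (fun q => Zf (draw x q k)) p =
  sumR F (fun j => Zf (draw x p j)) / INR (size F).
Proof.
move=> Hp Hk HF HI HIF HW.
set G := fun q => map (draw x q) I.
set S := cls (Omega N) G p.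
have US : uniq S by rewrite /S /cls filter_uniq // /Omega permutations_uniq.
have Hk1 := HF k Hk.
have step : forall j, j \in F -> sumR S (fun q => Zf (draw x q k)) = sumR S (fun q => Zf (draw x q j)).
  move=> j Hj; have Hj1 := HF j Hj.
  set phi := swp k.-1 j.-1.
  have Hsz : forall q, q \in S -> (k.-1 < size q)%N /\ (j.-1 < size q)%N.
    move=> q; rewrite mem_cls => /andP [Hq _]; rewrite (size_Omega _ _ Hq).
    move: Hk1 Hj1 => /andP [? ?] /andP [? ?]; split; lia.
  rewrite -(sumR_inv_map S phi (fun q => Zf (draw x q j))) //.
  - apply: sumR_ext_in => q Hq; have [H1 H2] := Hsz q Hq.
    rewrite /draw !subn1 nth_swp // /tr eqxx.
    by case: eqP => [->|].
  - move=> q Hq; have [H1 H2] := Hsz q Hq.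
    move: Hq; rewrite !mem_cls => /andP [Hq HG]; apply/andP; split.
      rewrite /Omega mem_permutations; apply: (perm_trans (perm_swp _ _ _ H1 H2)).
      by rewrite -mem_permutations.
    suff -> : G (phi q) = G q by [].
    rewrite /G; apply/eq_in_map => i Hi; rewrite /draw nth_swp // /tr.
    have Hi1 := HI i Hi; have Hik := HIF i k Hi Hk; have Hij := HIF i j Hi Hj.
    have -> : ((i - 1)%N == k.-1) = false.
      apply/eqP => E; apply: Hik; move: Hi1 Hk1 E => ? /andP [? ?] /eqP ?; lia.
    have -> : ((i - 1)%N == j.-1) = false.
      apply/eqP => E; apply: Hij; move: Hi1 Hj1 E => ? /andP [? ?] /eqP ?; lia.
    by [].
  - by move=> q Hq; have [H1 H2] := Hsz q Hq; rewrite /phi swpK.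
have HS : (0 < size S)%N.
  have := p_in_cls _ G _ Hp; rewrite -/S.
  by case: (S).
have HF0 : (0 < size F)%N by case: (F) Hk.
have E1 : INR (size F) * sumR S (fun q => Zf (draw x q k)) =
          INR (size S) * sumR F (fun j => Zf (draw x p j)).
  rewrite -sumR_const (sumR_ext_in _ _ (fun j => sumR S (fun q => Zf (draw x q j)))) //.
  rewrite sumR_swap -sumR_const; apply: sumR_ext_in => q Hq.
  exact: HW.
rewrite condE_avg /avg -/S.
have := INR_posn HS; have := INR_posn HF0; move=> H1 H2.
apply: (Rmult_eq_reg_l (INR (size F) * INR (size S))); last by nra.
have E : forall a c d : R, c <> 0 -> d <> 0 -> c * d * (a / d) = d * (c * a) / d by move=> *; field.
rewrite E; try lra.
rewrite E1; field; lra.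
Qed.

Lemma map_draw x (q : seq nat) (a m : nat) : (0 < a)%N -> (a.-1 + m <= size q)%N ->
  map (draw x q) (iota a m) = map x (take m (drop a.-1 q)).
Proof.
case: a => // a _ /= Hm.
rewrite -(map_nth_iota 0%N); last by lia.
rewrite -map_comp -[a.+1]/(1 + a)%N iotaDl -map_comp.
apply/eq_in_map => j _ /=; rewrite /draw; congr (x (nth 0%N q _)); lia.
Qed.

Lemma sum_Omega N (Z : nat -> R) q : q \in Omega N -> sumR q Z = sumR (iota 0 N) Z.
Proof. by rewrite /Omega mem_permutations => P; apply: sumR_perm. Qed.

Lemma helpA a b : a = b + a - b. Proof. ring. Qed.
Lemma helpB a b : a = a + b - b. Proof. ring. Qed.

Section Bridge.
Variables (N : nat) (x : nat -> R).
Let mu := pop_mean N x.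
Let Zx := fun i => (x i - mu) ^ 2.
Let Zf := fun v => (v - mu) ^ 2.

Lemma sumR_mapx l : sumR (map x l) Zf = sumR l Zx.
Proof. by rewrite sumR_map. Qed.

Lemma gt_bound (k : nat) (p : seq nat) : (1 <= k <= N)%N -> p \in Omega N ->
  sigma2_gt N x k p <= mZ Zx (drop k.-1 p).
Proof.
move=> /andP [Hk1 HkN] Hp.
rewrite /sigma2_gt.
apply: (Rle_trans _ _ _ (condVar_le _ _ _ _ mu Hp)).
have Wq : forall q, q \in Omega N ->
   sumR (iota k (N - k.-1)) (fun j => Zf (draw x q j)) = sumR (drop k.-1 q) Zx.
  move=> q Hq; have Hs := size_Omega _ _ Hq.
  rewrite -sumR_map map_draw; [|by []|rewrite Hs; lia].
  by rewrite sumR_mapx take_oversize // size_drop Hs.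
rewrite (bridge N x (iota 1 (k - 1)) (iota k (N - k.-1)) k p Zf Hp).
- rewrite Wq // /mZ size_iota size_drop (size_Omega _ _ Hp) //; apply: Rle_refl.
- by rewrite mem_iota; apply/andP; split; lia.
- by move=> j0; rewrite mem_iota => /andP [? ?]; apply/andP; split; lia.
- by move=> i0; rewrite mem_iota => /andP [? ?]; lia.
- by move=> i0 j0; rewrite !mem_iota => /andP [? ?] /andP [? ?]; lia.
move=> q; rewrite mem_cls => /andP [Hq /eqlR_eq HG].
rewrite !Wq //.
have E : forall r, r \in Omega N -> sumR (drop k.-1 r) Zx =
    sumR (iota 0 N) Zx - sumR (map (draw x r) (iota 1 (k - 1))) Zf.
  move=> r Hr; have Hs := size_Omega _ _ Hr.
  rewrite map_draw; [|by []|rewrite Hs; lia].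
  rewrite sumR_mapx drop0 -(sum_Omega N Zx r Hr).
  have Hc : sumR r Zx = sumR (take (k - 1) r) Zx + sumR (drop (k - 1) r) Zx by rewrite -sumR_cat cat_take_drop.
  rewrite Hc subn1; exact: helpA.
by rewrite (E q Hq) (E p Hp) HG.
Qed.

Lemma lt_bound (j : nat) (p : seq nat) : (1 <= j <= N)%N -> p \in Omega N ->
  sigma2_lt N x j p <= mZ Zx (take j p).
Proof.
move=> /andP [Hj1 HjN] Hp.
rewrite /sigma2_lt.
apply: (Rle_trans _ _ _ (condVar_le _ _ _ _ mu Hp)).
have Wq : forall q, q \in Omega N ->
   sumR (iota 1 j) (fun i => Zf (draw x q i)) = sumR (take j q) Zx.
  move=> q Hq; have Hs := size_Omega _ _ Hq.
  rewrite -sumR_map map_draw; [|by []|rewrite Hs; lia].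
  by rewrite sumR_mapx drop0.
rewrite (bridge N x (iota j.+1 (N - j)) (iota 1 j) j p Zf Hp).
- rewrite Wq // /mZ size_iota size_take (size_Omega _ _ Hp).
  have -> : (if (j < N)%N then j else N) = j by case: ltnP => //; lia.
  apply: Rle_refl.
- by rewrite mem_iota; apply/andP; split; lia.
- by move=> i0; rewrite mem_iota => /andP [? ?]; apply/andP; split; lia.
- by move=> i0; rewrite mem_iota => /andP [? ?]; lia.
- by move=> i0 j0; rewrite !mem_iota => /andP [? ?] /andP [? ?]; lia.
move=> q; rewrite mem_cls => /andP [Hq /eqlR_eq HG].
rewrite !Wq //.
have E : forall r, r \in Omega N -> sumR (take j r) Zx =
    sumR (iota 0 N) Zx - sumR (map (draw x r) (iota j.+1 (N - j))) Zf.
  move=> r Hr; have Hs := size_Omega _ _ Hr.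
  rewrite map_draw; [|by []|rewrite Hs; lia].
  rewrite sumR_mapx /= [take (N - j) _]take_oversize; last by rewrite size_drop Hs.
  rewrite -(sum_Omega N Zx r Hr).
  have Hc : sumR r Zx = sumR (take j r) Zx + sumR (drop j r) Zx by rewrite -sumR_cat cat_take_drop.
  rewrite Hc; exact: helpB.
by rewrite (E q Hq) (E p Hp) HG.
Qed.
End Bridge.


Lemma foldr_max_gt d (l : seq nat) f b : b < foldr Rmax d (map f l) ->
  b < d \/ exists2 k, k \in l & b < f k.
Proof.
elim: l => [|a l IH] /=; first by left.
rewrite /Rmax; case: Rle_dec => H Hb.
  case: (IH Hb) => [|[k Hk Hbk]]; first by left.
  by right; exists k => //; rewrite in_cons Hk orbT.
by right; exists a => //; rewrite mem_head.
Qed.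

Lemma maxR_gt (l : seq nat) f b : (0 < size l)%N -> ~~ Rleb (maxR l f) b -> exists2 k, k \in l & b < f k.
Proof.
rewrite /maxR /Rleb; case: Rle_dec => // H Hl _.
case: (foldr_max_gt _ _ _ b (Rnot_le_lt _ _ H)) => [Hb|//].
by exists (head 0%N l) => //; case: l Hl {H Hb} => // a l _; rewrite mem_head.
Qed.

Lemma foldr_min_le d (l : seq nat) x i : i \in l -> foldr Rmin d (map x l) <= x i.
Proof.
elim: l => [|a l IH] //=; rewrite in_cons => /orP [/eqP ->|Hi].
  exact: Rmin_l.
apply: Rle_trans (Rmin_r _ _) (IH Hi).
Qed.

Lemma foldr_max_ge d (l : seq nat) x i : i \in l -> x i <= foldr Rmax d (map x l).
Proof.
elim: l => [|a l IH] //=; rewrite in_cons => /orP [/eqP ->|Hi].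
  exact: Rmax_l.
apply: Rle_trans (IH Hi) (Rmax_r _ _).
Qed.

Lemma sumR_nonneg_zero (l : seq nat) f : (forall a, a \in l -> 0 <= f a) -> sumR l f = 0 ->
  forall a, a \in l -> f a = 0.
Proof.
elim: l => [|b l IH] // H S a; rewrite in_cons.
have Hb := H b (mem_head _ _).
have Hl : forall a, a \in l -> 0 <= f a by move=> c Hc; apply: H; rewrite in_cons Hc orbT.
have := sumR_nonneg_in l f Hl.
rewrite sumR_cons in S => Hs.
have Fb : f b = 0 by lra.
case/orP => [/eqP -> //|Ha].
apply: IH => //; lra.
Qed.

Lemma ln_inv_ge0 d : 0 < d <= 1 -> 0 <= ln (1 / d).
Proof.
move=> Hd; rewrite /Rdiv Rmult_1_l ln_Rinv; last lra.
case: (Req_dec d 1) => [->|Hne]; first by rewrite ln_1; lra.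
have := ln_increasing d 1 (proj1 Hd) (ltac:(lra)); rewrite ln_1; lra.
Qed.

Section Main.
Variables (N : nat) (x : nat -> R).
Let mu := pop_mean N x.
Let Zx := fun i => (x i - mu) ^ 2.
Let M := pop_max N x.
Let m := pop_min N x.

Lemma x_bounds i : i \in iota 0 N -> m <= x i <= M.
Proof. by move=> Hi; split; [apply: foldr_min_le | apply: foldr_max_ge]. Qed.

Lemma mu_bounds : (0 < N)%N -> m <= mu <= M.
Proof.
move=> HN; have HN' := INR_posn HN.
have H1 := sumR_le_in (iota 0 N) (fun _ => m) x (fun i Hi => proj1 (x_bounds i Hi)).
have H2 := sumR_le_in (iota 0 N) x (fun _ => M) (fun i Hi => proj2 (x_bounds i Hi)).
rewrite !sumR_const size_iota in H1 H2.
rewrite /mu /pop_mean; split.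
  apply: (Rmult_le_reg_l (INR N)) => //.
  have -> : INR N * (sumR (iota 0 N) x / INR N) = sumR (iota 0 N) x by field; lra.
  exact: H1.
apply: (Rmult_le_reg_l (INR N)) => //.
have -> : INR N * (sumR (iota 0 N) x / INR N) = sumR (iota 0 N) x by field; lra.
exact: H2.
Qed.

Lemma Zx_facts : (0 < N)%N -> forall i, i \in iota 0 N ->
  0 <= Zx i /\ Zx i * Zx i <= (M - m) ^ 2 * Zx i.
Proof.
move=> HN i Hi; have [H1 H2] := x_bounds i Hi; have [H3 H4] := mu_bounds HN.
have Z0 : 0 <= Zx i by rewrite /Zx; apply: pow2_ge_0.
split => //.
apply: Rmult_le_compat_r => //.
rewrite /Zx.
have : (x i - mu) ^ 2 <= (M - m) ^ 2.
  have -> : (x i - mu) ^ 2 = (x i - mu) * (x i - mu) by ring.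
  have -> : (M - m) ^ 2 = (M - m) * (M - m) by ring.
  nra.
by [].
Qed.

Lemma mZ_pop : mZ Zx (iota 0 N) = pop_var N x.
Proof. by rewrite /mZ size_iota. Qed.

Lemma pop_var_ge0 : 0 <= pop_var N x.
Proof.
rewrite /pop_var; case: (posnP N) => [->|HN].
  by rewrite /=; lra.
apply: Rmult_le_pos; last by apply: Rlt_le; apply: Rinv_0_lt_compat; apply: INR_posn.
by apply: sumR_nonneg_in => a _; apply: pow2_ge_0.
Qed.

Definition tK (d : R) (K : nat) :=
  pop_sd N x * (pop_max N x - pop_min N x) * INR K / INR (N - K) * sqrt (2 * ln (1 / d) / INR K).

Lemma mainK d K : 0 < d <= 1 -> (0 < K)%N -> (K < N)%N ->
  Ep (iota 0 N) (fun p => indR (ev Zx (pop_var N x + tK d K) K p)) <= d.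
Proof.
move=> Hd HK HKN.
have HN : (0 < N)%N by lia.
have Us : uniq (iota 0 N) by exact: iota_uniq.
have HMm : 0 <= M - m.
  have := x_bounds 0%N (ltac:(by rewrite mem_iota; lia)); lra.
have HL := ln_inv_ge0 d Hd.
have HKr := INR_posn HK.
have HNKr : 0 < INR (N - K) by apply: INR_posn; lia.
have Ht : 0 <= tK d K.
  rewrite /tK; apply: Rmult_le_pos; last exact: sqrt_pos.
  rewrite /Rdiv; apply: Rmult_le_pos; last by apply: Rlt_le; apply: Rinv_0_lt_compat.
  apply: Rmult_le_pos; last lra.
  apply: Rmult_le_pos; [exact: sqrt_pos| exact HMm].
have Hv := pop_var_ge0.
set B := (M - m) ^ 2.
case: (Req_dec (pop_var N x * B) 0) => Hv0.
  have Z0 : forall i, i \in iota 0 N -> Zx i = 0.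
    case: (Rmult_integral _ _ Hv0) => H0 i Hi.
      apply: (sumR_nonneg_zero (iota 0 N) Zx) => //.
        by move=> a _; apply: pow2_ge_0.
      have HNr := INR_posn HN.
      have E0 : sumR (iota 0 N) Zx = pop_var N x * INR N.
        by rewrite /pop_var /Zx /mu; field; lra.
      by rewrite E0 H0 Rmult_0_l.
    have [A1 A2] := Zx_facts HN i Hi; rewrite -/B H0 in A2; nra.
  rewrite (Ep_ext _ _ (fun _ => 0)) ?Ep_const //; first lra.
  move=> p P; rewrite /indR.
  suff -> : ev Zx (pop_var N x + tK d K) K p = false by [].
  apply/hasPn => j _; rewrite /Rltb; case: Rlt_dec => //.
  have -> : mZ Zx (drop j p) = 0.
    rewrite /mZ (sumR_ext_in _ _ (fun _ => 0)); first by rewrite sumR_const; lra.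
    by move=> a Ha; apply: Z0; rewrite -(perm_mem P); exact: mem_drop Ha.
  by move=> Hc; exfalso; lra.
have Hv1 : 0 < pop_var N x.
  case: (Rle_lt_or_eq_dec _ _ Hv) => // E; rewrite -E Rmult_0_l in Hv0; lra.
have HB : 0 < B.
  have : 0 <= B by apply: pow2_ge_0.
  move=> HB0; case: (Rle_lt_or_eq_dec _ _ HB0) => // E; rewrite -E Rmult_0_r in Hv0; lra.
have Hw : 0 < M - m.
  case: (Rle_lt_or_eq_dec _ _ HMm) => // E; rewrite /B -E in HB; lra.
set sd := pop_sd N x.
have Hsd : 0 < sd by rewrite /sd /pop_sd; apply: sqrt_lt_R0.
have Esd : sd * sd = pop_var N x by rewrite /sd /pop_sd sqrt_sqrt; lra.
set u := sqrt (2 * ln (1 / d) / INR K).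
have Hu : 0 <= u by exact: sqrt_pos.
have Eu : u * u = 2 * ln (1 / d) / INR K.
  rewrite /u sqrt_sqrt //; apply: Rmult_le_pos; first lra.
  by apply: Rlt_le; apply: Rinv_0_lt_compat.
set alpha := u / (sd * (M - m)).
have Ha : 0 <= alpha.
  rewrite /alpha /Rdiv; apply: Rmult_le_pos => //.
  apply: Rlt_le; apply: Rinv_0_lt_compat; nra.
have C := conc Zx B (iota 0 N) K alpha (tK d K) Us HK (ltac:(by rewrite size_iota)) (Zx_facts HN) (ltac:(lra)) Ha.
rewrite mZ_pop size_iota in C.
apply: (Rle_trans _ _ _ C).
have Et : tK d K = sd * (M - m) * INR K / INR (N - K) * u by [].
have E : alpha ^ 2 * INR K * pop_var N x * B / 2 - alpha * (INR N - INR K) * tK d K = - ln (1 / d).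
  rewrite Et -Esd /alpha /B minus_INR; last by apply/leP; lia.
  rewrite minus_INR in HNKr; last by apply/leP; lia.
  have Hsw : sd * (M - m) <> 0 by nra.
  have E2 : u ^ 2 = 2 * ln (1 / d) / INR K by rewrite -Eu; ring.
  have E3 : (u / (sd * (M - m))) ^ 2 * INR K * (sd * sd) * (M - m) ^ 2 / 2 -
     u / (sd * (M - m)) * (INR N - INR K) * (sd * (M - m) * INR K / (INR N - INR K) * u) =
     - (u ^ 2 * INR K) / 2.
    field; split; lra.
  rewrite E3 E2; field; lra.
rewrite E /Rdiv Rmult_1_l ln_Rinv; last lra.
rewrite Ropp_involutive exp_ln; lra.
Qed.
End Main.

Lemma Ep_rev (s : seq nat) f : Ep s (fun p => f (rev p)) = Ep s f.
Proof.
have E : Ep s (fun p => f (rev p)) = avg (map rev (permutations s)) f.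
  by rewrite /Ep /avg sumR_map size_map.
rewrite E /Ep; apply: avg_perm; apply: uniq_perm.
- by rewrite map_inj_uniq ?permutations_uniq //; exact: (can_inj revK).
- exact: permutations_uniq.
move=> t; apply/mapP/idP => [[t' Ht' ->]|Ht].
  by move: Ht'; rewrite !mem_permutations perm_rev.
by exists (rev t); [rewrite mem_permutations perm_rev -mem_permutations | rewrite revK].
Qed.

Lemma Ep_compl (s : seq nat) (E : seq nat -> bool) : uniq s ->
  Ep s (fun p => if E p then 1 else 0) = 1 - Ep s (fun p => indR (~~ E p)).
Proof.
move=> Us.
rewrite (Ep_ext _ _ (fun p => 1 + (-1) * indR (~~ E p))); last first.
  by move=> p _; rewrite /indR; case: (E p) => /=; ring.
rewrite /Ep avg_plus avg_scale avg_const; last exact: size_perms_pos.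
have hC : forall a : R, 1 + -1 * a = 1 - a by move=> a; ring.
exact: hC.
Qed.

Lemma mZ_rev Z (l : seq nat) : mZ Z (rev l) = mZ Z l.
Proof. by apply: mZ_perm; rewrite perm_rev. Qed.

Theorem lemma6 (N : nat) (x : nat -> R) (delta : R) :
  0 < delta <= 1 ->
  (forall n : nat, (2 <= n <= N)%N ->
     prob N (fun p =>
       Rleb (maxR (iota 1 n) (fun k => sigma2_gt N x k p))
            (pop_var N x
             + pop_sd N x * (pop_max N x - pop_min N x) * INR (n - 1)
               / INR (N - n + 1)
               * sqrt (2 * ln (1 / delta) / INR (n - 1))))
     >= 1 - delta)
  /\
  (forall n : nat, (1 <= n)%N -> (n <= N - 2)%N ->
     prob N (fun p =>
       Rleb (maxR (iota n (N - n)) (fun k => sigma2_lt N x k.+1 p))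
            (pop_var N x
             + pop_sd N x * (pop_max N x - pop_min N x) * INR (N - n - 1)
               / INR (n + 1)
               * sqrt (2 * ln (1 / delta) / INR (N - n - 1))))
     >= 1 - delta).
Proof.
move=> Hd.
set Zx := fun i => (x i - pop_mean N x) ^ 2.
have Us : uniq (iota 0 N) by exact: iota_uniq.
split.
  move=> n /andP [Hn2 HnN].
  set K := (n - 1)%N.
  have HK : (0 < K)%N by rewrite /K; lia.
  have HKN : (K < N)%N by rewrite /K; lia.
  have Enat : (N - n + 1 = N - K)%N by rewrite /K; lia.
  rewrite Enat -/K.
  rewrite /prob /Rge -/(avg (Omega N) _) -/(Ep (iota 0 N) _) Ep_compl //.
  have Hm := mainK N x delta K Hd HK HKN.
  suff : Ep (iota 0 N) (fun p => indR (~~ Rleb (maxR (iota 1 n) (fun k => sigma2_gt N x k p)) (pop_var N x + tK N x delta K))) <= delta.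
    rewrite /tK; lra.
  apply: Rle_trans Hm; apply: Ep_le => // p P.
  rewrite /indR; case Hc : (~~ _); last by case: ev; lra.
  have Hp : p \in Omega N by rewrite /Omega mem_permutations.
  have Hsz : (0 < size (iota 1 n))%N by rewrite size_iota; lia.
  have [k Hk Hlt] := maxR_gt _ _ _ Hsz Hc.
  move: Hk; rewrite mem_iota => /andP [Hk1 Hk2].
  have Hb := gt_bound N x k p (ltac:(apply/andP; split; lia)) Hp.
  suff -> : ev Zx (pop_var N x + tK N x delta K) K p by lra.
  apply/hasP; exists k.-1; first by rewrite mem_iota; lia.
  by rewrite /Rltb; case: Rlt_dec => // Hn; exfalso; apply: Hn; exact: Rlt_le_trans Hlt Hb.
move=> n Hn1 Hn2.
set K := (N - n - 1)%N.
have HK : (0 < K)%N by rewrite /K; lia.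
have HKN : (K < N)%N by rewrite /K; lia.
have Enat : (n + 1 = N - K)%N by rewrite /K; lia.
rewrite Enat -/K.
rewrite /prob /Rge -/(avg (Omega N) _) -/(Ep (iota 0 N) _) Ep_compl //.
have Hm := mainK N x delta K Hd HK HKN.
rewrite -(Ep_rev (iota 0 N) (fun p => indR (ev Zx (pop_var N x + tK N x delta K) K p))) in Hm.
suff : Ep (iota 0 N) (fun p => indR (~~ Rleb (maxR (iota n (N - n)) (fun k => sigma2_lt N x k.+1 p)) (pop_var N x + tK N x delta K))) <= delta.
  rewrite /tK; lra.
apply: Rle_trans Hm; apply: Ep_le => // p P.
rewrite /indR; case Hc : (~~ _); last by case: ev; lra.
have Hp : p \in Omega N by rewrite /Omega mem_permutations.
have Hs := size_Omega _ _ Hp.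
have Hsz : (0 < size (iota n (N - n)))%N by rewrite size_iota; lia.
  have [k Hk Hlt] := maxR_gt _ _ _ Hsz Hc.
move: Hk; rewrite mem_iota => /andP [Hk1 Hk2].
have Hb := lt_bound N x k.+1 p (ltac:(apply/andP; split; lia)) Hp.
suff -> : ev Zx (pop_var N x + tK N x delta K) K (rev p) by lra.
apply/hasP; exists (N - k.+1)%N; first by rewrite mem_iota; lia.
rewrite drop_rev mZ_rev Hs.
have -> : (N - (N - k.+1))%N = k.+1 by lia.
by rewrite /Rltb; case: Rlt_dec => // Hn; exfalso; apply: Hn; exact: Rlt_le_trans Hlt Hb.
Qed.
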